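(* Consider a power network whose graph $(\mathcal{V},\mathcal{E})$, $\mathcal{V}=\{1,\dots,n\}$, is a tree, with fixed voltage magnitudes $|V_i|=\overline{V}_i>0$ at every bus and, for every line $(i,k)\in\mathcal{E}$, a local angle constraint $\underline{\theta}_{ik}\le\theta_{ik}\le\overline{\theta}_{ik}$ with $\underline{\theta}_{ik}\in[-\pi,0]$, $\overline{\theta}_{ik}\in[0,\pi]$ (and no other constraints). Let $\mathcal{F}=\prod_{(i,k)\in\mathcal{E}}\mathcal{F}_{ik}$ be the flow region and $\mathcal{P}=\mathbf{A}\mathcal{F}$ the injection region. Then $\mathcal{O}(\mathcal{P})=\mathcal{O}(\mathrm{conv}(\mathcal{P}))$.
   Context: Each line $(i,k)\in\mathcal{E}$ has admittance $y_{ik}=g_{ik}-jb_{ik}$ with $g_{ik},b_{ik}\ge0$. For a line $(i,k)$ and angle difference $\theta_{ik}=\theta_i-\theta_k$ of the bus voltage phases, the flows are $P_{ik}=\overline{V}_i^2 g_{ik}+\overline{V}_i\overline{V}_k b_{ik}\sin\theta_{ik}-\overline{V}_i\overline{V}_k g_{ik}\cos\theta_{ik}$ and $P_{ki}=\overline{V}_k^2 g_{ik}-\overline{V}_i\overline{V}_k b_{ik}\sin\theta_{ik}-\overline{V}_i\overline{V}_k g_{ik}\cos\theta_{ik}$. The two-bus flow region $\mathcal{F}_{ik}\subset\mathbb{R}^2$ is the set of pairs $(P_{ik},P_{ki})$ obtained as $\theta_{ik}$ ranges over $[\underline{\theta}_{ik},\overline{\theta}_{ik}]$; $\mathcal{F}\subset\mathbb{R}^{2|\mathcal{E}|}$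 is the product of these sets (one coordinate per ordered pair $(i,k)$ and $(k,i)$). $\mathbf{A}$ is the $n\times 2|\mathcal{E}|$ matrix with $A(i,(k,l))=1$ if $i=k$ and $0$ otherwise, so that $(\mathbf{A}\mathbf{f})_i=P_i=\sum_{k\sim i}P_{ik}$ is the net real power injection at bus $i$. For $\mathcal{A}\subseteq\mathbb{R}^m$, $\mathcal{O}(\mathcal{A})$ is the set of Pareto-optimal points of $\mathcal{A}$ (points $x\in\mathcal{A}$ such that no $y\in\mathcal{A}$ satisfies $y\le x$ componentwise with strict inequality in some coordinate), and $\mathrm{conv}$ denotes convex hull. *)

(* Defs.v *)
From HB Require Import structures.
From mathcomp Require Import all_boot all_order all_algebra.
From mathcomp Require Import all_classical all_reals all_analysis.
Set Implicit Arguments. Unset Strict Implicit. Unset Printing Implicit Defensive.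
Import Order.TTheory GRing.Theory Num.Theory.
Local Open Scope classical_set_scope.
Local Open Scope ring_scope.

Section PowerDefs.
Variable R : realType.

(* A network on buses 'I_n with m lines; line e joins (ends e).1 and (ends e).2,
   i.e. it is the line (i,k) with i = (ends e).1, k = (ends e).2. *)

Definition adj_wo (n m : nat) (ends : 'I_m -> 'I_n * 'I_n) (e0 : option 'I_m)
  : rel 'I_n :=
  fun i j => [exists e : 'I_m, (Some e != e0) &&
     (((ends e).1 == i) && ((ends e).2 == j) ||
      ((ends e).1 == j) && ((ends e).2 == i))].

(* tree: nonempty, connected, and acyclic (every line is a bridge, i.e. its
   endpoints are disconnected once the line is removed; this also rules out
   self-loops and parallel lines) *)
Definition is_tree (n m : nat) (ends : 'I_m -> 'I_n * 'I_n) : Prop :=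
  (0 < n)%N /\
  (forall i j : 'I_n, connect (adj_wo ends None) i j) /\
  (forall e : 'I_m, ~~ connect (adj_wo ends (Some e)) (ends e).1 (ends e).2).

Definition flow_ik (Vi Vk g b th : R) : R :=
  Vi ^+ 2 * g + Vi * Vk * b * sin th - Vi * Vk * g * cos th.
Definition flow_ki (Vi Vk g b th : R) : R :=
  Vk ^+ 2 * g - Vi * Vk * b * sin th - Vi * Vk * g * cos th.

Definition flow_region (Vi Vk g b lo hi : R) : set (R * R) :=
  [set pq | exists th, lo <= th <= hi /\
            pq = (flow_ik Vi Vk g b th, flow_ki Vi Vk g b th)].

(* injection region P = A F, F = product of the F_ik:
   P_i = sum over ordered pairs (i,k) of the flow P_ik *)
Definition injection_region (n m : nat) (ends : 'I_m -> 'I_n * 'I_n)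
  (V : 'I_n -> R) (g b lo hi : 'I_m -> R) : set ('I_n -> R) :=
  [set p | exists f : 'I_m -> R * R,
     (forall e, flow_region (V (ends e).1) (V (ends e).2) (g e) (b e) (lo e) (hi e) (f e)) /\
     p = (fun i => \sum_(e < m | (ends e).1 == i) (f e).1
                 + \sum_(e < m | (ends e).2 == i) (f e).2)].

Definition pareto (n : nat) (A : set ('I_n -> R)) : set ('I_n -> R) :=
  [set x | A x /\ ~ (exists y, A y /\ (forall i, y i <= x i) /\ (exists i, y i < x i))].

Definition conv_hull (n : nat) (A : set ('I_n -> R)) : set ('I_n -> R) :=
  [set x | exists (k : nat) (w : 'I_k -> R) (p : 'I_k -> 'I_n -> R),
     (forall j, 0 <= w j) /\ \sum_(j < k) w j = 1 /\ (forall j, A (p j)) /\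
     x = (fun i => \sum_(j < k) w j * p j i)].

End PowerDefs.

(* Main.v *)
Require Import Defs.
From HB Require Import structures.
From mathcomp Require Import all_boot all_order all_algebra.
From mathcomp Require Import all_classical all_reals all_analysis.
From mathcomp Require Import ring lra.
Import Order.TTheory GRing.Theory Num.Theory.
Local Open Scope classical_set_scope.
Local Open Scope ring_scope.

Section Aux.
Variable R : realType.

Lemma lin3 k (w x y : 'I_k -> R) (A B C : R) :
  \sum_(j < k) w j * (A + B * x j + C * y j) =
  A * \sum_(j < k) w j + B * \sum_(j < k) w j * x j + C * \sum_(j < k) w j * y j.
Proof.
rewrite !mulr_sumr -!big_split /=; apply: eq_bigr => j _; ring.
Qed.

Lemma jensen2 k (w a : 'I_k -> R) : (forall j, 0 <= w j) -> \sum_(j < k) w j = 1 ->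
  (\sum_(j < k) w j * a j) ^+ 2 <= \sum_(j < k) w j * a j ^+ 2.
Proof.
move=> w0 w1; set s := \sum_(j < k) w j * a j.
have H : 0 <= \sum_(j < k) w j * (a j - s) ^+ 2.
  by apply: sumr_ge0 => j _; apply: mulr_ge0 => //; apply: sqr_ge0.
have E : \sum_(j < k) w j * (a j - s) ^+ 2 =
   \sum_(j < k) w j * (s ^+ 2 + (- (2 * s)) * a j + 1 * a j ^+ 2).
  by apply: eq_bigr => j _; ring.
rewrite E lin3 w1 -/s mul1r in H; lra.
Qed.

Lemma sin_le_hi (hi th : R) : -pi <= th -> th <= hi -> 0 <= hi < pi / 2 -> sin th <= sin hi.
Proof.
move=> h1 h2 /andP[h3 h4].
have pi0 := pi_gt0 R.
have shi : 0 <= sin hi by apply: sin_ge0_pi; apply/andP; split; lra.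
case: (lerP th 0) => ht.
  have : 0 <= sin (- th) by apply: sin_ge0_pi; apply/andP; split; lra.
  rewrite sinN; lra.
rewrite leNgt; apply/negP => H.
rewrite ltr_sin ?in_itv /= in H; try (apply/andP; split; lra).
lra.
Qed.

Lemma sin_ge_lo (lo th : R) : th <= pi -> lo <= th -> - (pi / 2) < lo <= 0 -> sin lo <= sin th.
Proof.
move=> h1 h2 h3.
have := @sin_le_hi (- lo) (- th); rewrite !sinN.
have pi0 := pi_gt0 R.
move=> H; suff : - sin th <= - sin lo by lra.
apply: H; lra.
Qed.

Lemma line_lemma Vi Vk g b lo hi k (w th : 'I_k -> R) :
  0 <= Vi -> 0 <= Vk -> 0 <= g -> - pi <= lo <= 0 -> 0 <= hi <= pi ->
  (forall j, 0 <= w j) -> \sum_(j < k) w j = 1 -> (forall j, lo <= th j <= hi) ->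
  exists t, lo <= t <= hi /\
    flow_ik Vi Vk g b t <= \sum_(j < k) w j * flow_ik Vi Vk g b (th j) /\
    flow_ki Vi Vk g b t <= \sum_(j < k) w j * flow_ki Vi Vk g b (th j).
Proof.
move=> Vi0 Vk0 g0 hlo hhi w0 w1 hth.
have pi0 := pi_gt0 R.
set s := \sum_(j < k) w j * sin (th j).
set c := \sum_(j < k) w j * cos (th j).
have J : s ^+ 2 + c ^+ 2 <= 1.
  have := @jensen2 k w (fun j => sin (th j)) w0 w1.
  have := @jensen2 k w (fun j => cos (th j)) w0 w1.
  have E : \sum_(j < k) w j * sin (th j) ^+ 2 + \sum_(j < k) w j * cos (th j) ^+ 2 = 1.
    rewrite -big_split /= -w1; apply: eq_bigr => j _.
    by rewrite -mulrDr addrC cos2Dsin2 mulr1.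
  rewrite -/s -/c; lra.
have s1 : -1 <= s <= 1.
  have : s ^+ 2 <= 1 by have := sqr_ge0 c; lra.
  move=> hs2; apply/andP; split; nra.
exists (asin s).
have hs : sin (asin s) = s by rewrite asinK // in_itv /=.
have hc : c <= cos (asin s).
  rewrite cos_asin //.
  case: (lerP c 0) => hc0; first by apply: le_trans hc0 (sqrtr_ge0 _).
  rewrite -(ger0_norm (ltW hc0)) -sqrtr_sqr ler_sqrt; last nra.
  lra.
split.
  apply/andP; split.
    case: (lerP lo (- (pi / 2))) => hl.
      by apply: le_trans hl (asin_geNpi2 s1).
    rewrite leNgt; apply/negP => H.
    have : sin (asin s) < sin lo.
    rewrite ltr_sin ?in_itv /= //; try (apply/andP; split); try lra;
      try exact: (asin_geNpi2 s1); try exact: (asin_lepi2 s1).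
    rewrite hs; apply/negP; rewrite -leNgt.
    rewrite -[sin lo]mul1r -w1 mulr_suml; apply: ler_sum => j _.
    apply: ler_wpM2l => //; have := hth j; move/andP=> [h1 h2]; apply: sin_ge_lo; try lra; apply/andP; split; lra.
  case: (lerP (pi / 2) hi) => hh.
    by apply: le_trans (asin_lepi2 s1) hh.
  rewrite leNgt; apply/negP => H.
  have : sin hi < sin (asin s).
    rewrite ltr_sin ?in_itv /= //; try (apply/andP; split); try lra;
      try exact: (asin_geNpi2 s1); try exact: (asin_lepi2 s1).
  rewrite hs; apply/negP; rewrite -leNgt.
  rewrite -[sin hi]mul1r -w1 mulr_suml; apply: ler_sum => j _.
  apply: ler_wpM2l => //; have := hth j; move/andP=> [h1 h2]; apply: sin_le_hi; lra.
have cg : 0 <= Vi * Vk * g by rewrite !mulr_ge0.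
split.
  have E : \sum_(j < k) w j * flow_ik Vi Vk g b (th j) =
     \sum_(j < k) w j * (Vi ^+ 2 * g + (Vi * Vk * b) * sin (th j) + (- (Vi * Vk * g)) * cos (th j)).
    by apply: eq_bigr => j _; rewrite /flow_ik; congr (_ * _); ring.
  rewrite E lin3 w1 -/s -/c /flow_ik hs.
  have := ler_wpM2l cg hc; lra.
have E : \sum_(j < k) w j * flow_ki Vi Vk g b (th j) =
   \sum_(j < k) w j * (Vk ^+ 2 * g + (- (Vi * Vk * b)) * sin (th j) + (- (Vi * Vk * g)) * cos (th j)).
  by apply: eq_bigr => j _; rewrite /flow_ki; congr (_ * _); ring.
rewrite E lin3 w1 -/s -/c /flow_ki hs.
have := ler_wpM2l cg hc; lra.
Qed.

End Aux.

Lemma key (R : realType) (n m : nat) (ends : 'I_m -> 'I_n * 'I_n)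
  (V : 'I_n -> R) (g b lo hi : 'I_m -> R) :
  (forall i, 0 < V i) -> (forall e, 0 <= g e) ->
  (forall e, - pi <= lo e <= 0) -> (forall e, 0 <= hi e <= pi) ->
  forall x, conv_hull (injection_region ends V g b lo hi) x ->
  exists z, injection_region ends V g b lo hi z /\ forall i, z i <= x i.
Proof.
move=> V0 g0 hlo hhi x [k [w [p [w0 [w1 [hp ->]]]]]].
have hp' : forall j, exists f : 'I_m -> R * R,
   (forall e, flow_region (V (ends e).1) (V (ends e).2) (g e) (b e) (lo e) (hi e) (f e)) /\
     p j = (fun i => \sum_(e < m | (ends e).1 == i) (f e).1
                 + \sum_(e < m | (ends e).2 == i) (f e).2).
  by move=> j; exact: hp j.
have [F hF] := choice hp'.
have hth : forall je : 'I_k * 'I_m, exists t, lo je.2 <= t <= hi je.2 /\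
   F je.1 je.2 = (flow_ik (V (ends je.2).1) (V (ends je.2).2) (g je.2) (b je.2) t,
                  flow_ki (V (ends je.2).1) (V (ends je.2).2) (g je.2) (b je.2) t).
  by move=> [j e]; exact: (hF j).1 e.
have [TH hTH] := choice hth.
have hT : forall e, exists t, lo e <= t <= hi e /\
    flow_ik (V (ends e).1) (V (ends e).2) (g e) (b e) t <=
      \sum_(j < k) w j * flow_ik (V (ends e).1) (V (ends e).2) (g e) (b e) (TH (j, e)) /\
    flow_ki (V (ends e).1) (V (ends e).2) (g e) (b e) t <=
      \sum_(j < k) w j * flow_ki (V (ends e).1) (V (ends e).2) (g e) (b e) (TH (j, e)).
  move=> e; apply: line_lemma => //; try exact: ltW.
  by move=> j; exact: (hTH (j, e)).1.
have [T hT'] := choice hT.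
exists (fun i => \sum_(e < m | (ends e).1 == i) flow_ik (V (ends e).1) (V (ends e).2) (g e) (b e) (T e)
            + \sum_(e < m | (ends e).2 == i) flow_ki (V (ends e).1) (V (ends e).2) (g e) (b e) (T e)).
split.
  exists (fun e => (flow_ik (V (ends e).1) (V (ends e).2) (g e) (b e) (T e),
                   flow_ki (V (ends e).1) (V (ends e).2) (g e) (b e) (T e))).
  split => //.
  by move=> e; exists (T e); split => //; exact: (hT' e).1.
move=> i.
have E : \sum_(j < k) w j * p j i =
   \sum_(e < m | (ends e).1 == i) \sum_(j < k) w j * (F j e).1 +
   \sum_(e < m | (ends e).2 == i) \sum_(j < k) w j * (F j e).2.
  rewrite (exchange_big_dep xpredT) //= [X in _ = _ + X](exchange_big_dep xpredT) //=.
  rewrite -big_split /=; apply: eq_bigr => j _.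
  by rewrite (hF j).2 /= mulrDr !mulr_sumr; congr (_ + _); apply: eq_bigl => e; rewrite andbT.
rewrite E; apply: lerD; apply: ler_sum => e _.
  have -> : \sum_(j < k) w j * (F j e).1 =
    \sum_(j < k) w j * flow_ik (V (ends e).1) (V (ends e).2) (g e) (b e) (TH (j, e)).
    by apply: eq_bigr => j _; rewrite (hTH (j, e)).2.
  exact: (hT' e).2.1.
have -> : \sum_(j < k) w j * (F j e).2 =
  \sum_(j < k) w j * flow_ki (V (ends e).1) (V (ends e).2) (g e) (b e) (TH (j, e)).
  by apply: eq_bigr => j _; rewrite (hTH (j, e)).2.
exact: (hT' e).2.2.
Qed.

Lemma sub_conv (R : realType) n (A : set ('I_n -> R)) x : A x -> conv_hull A x.
Proof.
move=> Ax; exists 1%N, (fun _ => 1), (fun _ => x); split; first by move=> _; exact: ler01.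
split; first by rewrite big_ord1.
split => //; apply: funext => i; by rewrite big_ord1 mul1r.
Qed.

Theorem lemma2 (R : realType) (n m : nat) (ends : 'I_m -> 'I_n * 'I_n)
  (V : 'I_n -> R) (g b lo hi : 'I_m -> R) :
  is_tree ends ->
  (forall i, 0 < V i) ->
  (forall e, 0 <= g e) -> (forall e, 0 <= b e) ->
  (forall e, - pi <= lo e <= 0) -> (forall e, 0 <= hi e <= pi) ->
  pareto (injection_region ends V g b lo hi) =
  pareto (conv_hull (injection_region ends V g b lo hi)).
Proof.
move=> _ V0 g0 _ hlo hhi.
have K := @key R n m ends V g b lo hi V0 g0 hlo hhi.
apply/seteqP; split => x [Px Hx].
  split; first exact: sub_conv.
  move=> [y [Cy [yx [i yi]]]].
  have [z [Pz zy]] := K y Cy.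
  apply: Hx; exists z; split => //; split.
    by move=> j; exact: le_trans (zy j) (yx j).
  by exists i; exact: le_lt_trans (zy i) yi.
have [z [Pz zx]] := K x Px.
have ezx : z = x.
  apply: funext => i; apply/eqP; rewrite eq_le zx /=.
  rewrite leNgt; apply/negP => zi; apply: Hx.
  by exists z; split; [exact: sub_conv | split => //; exists i].
split; first by rewrite -ezx.
move=> [y [Py [yx [i yi]]]]; apply: Hx.
by exists y; split; [exact: sub_conv | split => //; exists i].
Qed.
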